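(* For each integer $n>2$, there is a finite group $Q_n$ with the following properties: (1) $Q_n$ is generated by two elements $A,B$; (2) $Q_n$ is metabelian; (3) $Q_n$ is $n$-periodic, i.e. $g^n=1$ for all $g\in Q_n$; (4) the generator $A$ and the commutator $[A,B]$ both have order exactly $n$. *)

(* Defs.v *)
From mathcomp Require Import all_boot all_fingroup all_solvable.
Set Implicit Arguments.
Unset Strict Implicit.
Unset Printing Implicit Defensive.

Definition metabelian (gT : finGroupType) (G : {set gT}) : bool :=
  abelian (G^`(1))%g.

(* Main.v *)
Require Import Defs.
From mathcomp Require Import all_boot all_fingroup all_solvable all_algebra.
From mathcomp Require Import zify.
Set Implicit Arguments. Unset Strict Implicit. Unset Printing Implicit Defensive.
Import GRing.Theory.

Lemma per_iter (F : nat -> nat) P : (forall l, F (l + P) = F l) -> forall r l, F (l + P * r) = F l.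
Proof.
move=> HF; elim=> [|r IH] l; first by rewrite muln0 addn0.
by rewrite mulnS addnCA addnC HF IH.
Qed.

Lemma sum_per (F : nat -> nat) P r : (forall l, F (l + P) = F l) ->
  \sum_(l < P * r) F l = r * \sum_(l < P) F l.
Proof.
move=> HF; elim: r => [|r IH]; first by rewrite muln0 big_ord0 mul0n.
rewrite mulnS big_split_ord /= mulSn; congr (_ + _).
by rewrite -IH; apply: eq_bigr => i _; rewrite addnC HF.
Qed.

Lemma sum_bool_ord q : \sum_(l < q.+1) ((nat_of_ord l) == 0) = 1.
Proof. by rewrite big_ord_recl /= big1. Qed.

Lemma count_odd q x k : 0 < q -> coprime q k -> \sum_(l < q) (q %| x + k * l) = 1.
Proof.
case: q => // q _ cqk.
pose phi (l : 'I_q.+1) := Ordinal (@ltn_pmod (x + k * l) q.+1 isT).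
have phi_inj : injective phi.
  move=> a b /(congr1 val) /= /eqP; rewrite eqn_modDl => Hab.
  apply: val_inj => /=.
  have Ha := ltn_ord a; have Hb := ltn_ord b.
  wlog ab : a b Ha Hb Hab / a <= b.
    move=> W; case: (leqP a b) => [ab|ba]; first exact: W.
    by apply/esym/W => //; [rewrite eq_sym | exact: ltnW].
  move: Hab; rewrite eq_sym eqn_mod_dvd ?leq_mul2l ?ab ?orbT // -mulnBr Gauss_dvdr //.
  move/dvdnP => [[|c] Hc]; first lia.
have : q.+1 <= c.+1 * q.+1 by rewrite leq_pmull.
lia.
rewrite -(sum_bool_ord q) [RHS](reindex_inj phi_inj) /=.
by apply: eq_bigr => l _; rewrite /dvdn.
Qed.

Definition Ge (m e y : nat) := y + (m * 2 ^ e) * ((2 ^ e.+1 %| y) + y %% m).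

Lemma sumid N : \sum_(l < N) (l : nat) = 'C(N, 2).
Proof. by rewrite -bin2_sum big_mkord. Qed.

Lemma sum_lin N x k : \sum_(l < N) (x + k * l) = N * x + k * 'C(N, 2).
Proof.
by rewrite big_split /= sum_nat_const card_ord -big_distrr /= sumid.
Qed.

Lemma even_sum N m e x k : N = m * 2 ^ e.+1 -> odd m ->
  (\sum_(l < N) Ge m e ((x + k * l) %% N)) %% N = 0.
Proof.
move=> NE om.
set h := m * 2 ^ e; set q := 2 ^ e.+1.
have Nh : N = h * 2 by rewrite NE /h /q expnS mulnCA mulnC.
have Nq : N = q * m by rewrite NE mulnC.
have qN : q %| N by rewrite Nq dvdn_mulr.
have mN : m %| N by rewrite Nq dvdn_mull.
have m0 : 0 < m by case: m om {NE Nh Nq mN h}.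
have h0 : 0 < h by rewrite /h muln_gt0 m0 expn_gt0.
rewrite /Ge big_split /= -big_distrr /= big_split /=.
set c1 := \sum_(l < N) (q %| (x + k * l) %% N).
set c2 := \sum_(l < N) ((x + k * l) %% N %% m).
have c1E : c1 = \sum_(l < N) (q %| x + k * l).
  by apply: eq_bigr => l _; rewrite /dvdn (modn_dvdm _ qN).
have c2E : c2 = \sum_(l < N) ((x + k * l) %% m).
  by apply: eq_bigr => l _; rewrite (modn_dvdm _ mN).
have oc1 : odd c1 = odd k.
  rewrite c1E; case ok: (odd k).
    have cqk : coprime q k by rewrite /q coprimeXl // coprime2n.
    rewrite Nq (@sum_per (fun l => nat_of_bool (q %| x + k * l))); last first.
      by move=> l; rewrite mulnDr addnA dvdn_addl // dvdn_mull.
    by rewrite count_odd ?expn_gt0 // muln1.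
  have kE : k = k./2 * 2 by rewrite -{1}(odd_double_half k) ok add0n muln2.
  rewrite Nh (@sum_per (fun l => nat_of_bool (q %| x + k * l))); last first.
    move=> l; rewrite mulnDr addnA dvdn_addl //.
    by rewrite kE -mulnA [2 * h]mulnC -Nh dvdn_mull.
  by rewrite oddM.
have oc2 : odd c2 = false.
  rewrite c2E NE (@sum_per (fun l => (x + k * l) %% m)) ?oddM /q ?oddX ?andbF //.
  by move=> l; rewrite mulnDr addnA [in LHS]addnC modnMDl.
rewrite -modnDml modn_summ modnDml sum_lin.
have C2 : 'C(N, 2) = h * (h * 2).-1.
  by rewrite bin2 Nh mulnAC muln2 half_double.
have oN1 : odd (h * 2).-1.
  have hp : 0 < h * 2 by rewrite muln_gt0 h0.
  have := oddS (h * 2).-1; rewrite (prednK hp) oddM /= andbF.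
  by move/esym/negbFE.
rewrite -/h; apply/eqP; rewrite C2 -addnA -/(dvdn _ _); apply: dvdn_add.
  by rewrite Nh dvdn_mulr.
rewrite mulnCA -mulnDr Nh dvdn_pmul2l // dvdn2 oddD oddM oN1 oddD oc1 oc2.
by rewrite andbT addbF addbb.
Qed.

Lemma odd_sum N x k : odd N -> (\sum_(l < N) ((x + k * l) %% N)) %% N = 0.
Proof.
move=> oN; rewrite modn_summ sum_lin bin2odd //.
by apply/eqP; rewrite -/(dvdn _ _) mulnCA; apply: dvdn_add; apply: dvdn_mulr.
Qed.
Open Scope group_scope.
Definition sfun p (f : 'I_p.+1 -> 'I_p.+1) (k : 'I_p.+1) (z : 'I_p.+1 * 'I_p.+1) :=
  ((z.1 + k)%R, (z.2 + f z.1)%R).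

Lemma sfun_inj p f k : injective (@sfun p f k).
Proof.
move=> [a b] [c d] H; have e1 := congr1 fst H; have e2 := congr1 snd H.
rewrite /sfun [fst _]/= [fst (c, d)]/= in e1; rewrite /sfun [snd _]/= [snd (c, d)]/= in e2.
have eac : a = c by apply: (addIr k).
by subst c; congr pair; apply: (addIr (f a)).
Qed.

Definition sg p f k : {perm ('I_p.+1 * 'I_p.+1)} := perm (@sfun_inj p f k).

Lemma sgE p f k z : @sg p f k z = ((z.1 + k)%R, (z.2 + f z.1)%R).
Proof. by rewrite permE. Qed.

Lemma sg_ext p f f' k k' : f =1 f' -> k = k' -> @sg p f k = sg f' k'.
Proof. by move=> ef <-; apply/permP => z; rewrite !sgE ef. Qed.

Lemma sgM p f k f' k' : @sg p f k * sg f' k' = sg (fun x => (f x + f' (x + k))%R) (k + k')%R.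
Proof. by apply/permP => z; rewrite permM !sgE; cbn [fst snd]; rewrite !addrA. Qed.

Lemma sg1 p : @sg p (fun _ => 0%R) 0%R = 1.
Proof. by apply/permP => z; rewrite perm1 sgE !addr0; case: z. Qed.

Lemma sgV p f k : (@sg p f k)^-1 = sg (fun x => (- f (x - k))%R) (- k)%R.
Proof.
apply/eqP; rewrite eq_invg_mul sgM -sg1; apply/eqP; apply: sg_ext => [x|].
  by rewrite addrK subrr.
by rewrite subrr.
Qed.

Lemma sgX p f k j : (@sg p f k) ^+ j = sg (fun x => (\sum_(l < j) f (x + k *+ l))%R) (k *+ j)%R.
Proof.
elim: j => [|j IH].
  by rewrite expg0 -sg1; apply: sg_ext => [x|]; rewrite ?big_ord0 ?mulr0n.
rewrite expgSr IH sgM; apply: sg_ext => [x|]; last by rewrite mulrSr.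
by rewrite big_ord_recr.
Qed.

Definition good p (f : 'I_p.+1 -> 'I_p.+1) :=
  forall x k : 'I_p.+1, (\sum_(l < p.+1) f (x + k *+ l))%R = 0%R.

Definition SGset p : {set {perm ('I_p.+1 * 'I_p.+1)}} :=
  [set s | [exists f : {ffun 'I_p.+1 -> 'I_p.+1}, exists k : 'I_p.+1,
     [forall x : 'I_p.+1, forall k0 : 'I_p.+1, (\sum_(l < p.+1) f (x + k0 *+ l))%R == 0%R]
     && (s == sg f k)]].

Lemma SGsetP p s : reflect (exists f k, @good p f /\ s = sg f k) (s \in SGset p).
Proof.
apply: (iffP idP).
  rewrite inE => /existsP [f /existsP [k /andP [/forallP H /eqP ->]]].
  exists f, k; split=> // x k0; exact/eqP/(forallP (H x) k0).
move=> [f [k [Hg ->]]]; rewrite inE; apply/existsP; exists (finfun f).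
apply/existsP; exists k; apply/andP; split.
  apply/forallP => x; apply/forallP => k0; apply/eqP; rewrite -[RHS](Hg x k0).
  by apply: eq_bigr => l _; rewrite ffunE.
by apply/eqP/sg_ext => // x; rewrite ffunE.
Qed.

Lemma SG_group_set p : group_set (SGset p).
Proof.
apply/group_setP; split.
  apply/SGsetP; exists (fun _ => 0%R), 0%R; split; last by rewrite sg1.
  by move=> x k; rewrite big1.
move=> s t /SGsetP [f [k [Hf ->]]] /SGsetP [f' [k' [Hf' ->]]].
apply/SGsetP; rewrite sgM; eexists; eexists; split; last reflexivity.
move=> x k0; rewrite big_split /= Hf add0r -[RHS](Hf' (x + k)%R k0).
by apply: eq_bigr => l _; rewrite addrAC.
Qed.

Canonical SG p := Group (SG_group_set p).

Lemma sg_eq1 p f k : @sg p f k = 1 -> forall x, f x = 0%R.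
Proof.
move=> H x.
have := congr1 (fun s : {perm _} => s (x, 0%R)) H; rewrite sgE perm1 => /(congr1 snd); cbn [fst snd]; by rewrite add0r.
Qed.

Lemma mulrn_N p (u : 'I_p.+1) : (u *+ p.+1)%R = 0%R.
Proof. by apply: val_inj; rewrite Zp_mulrn /= modnMl. Qed.

Lemma sum_k0 p (f : 'I_p.+1 -> 'I_p.+1) x j : (\sum_(l < j) f (x + 0 *+ l) = f x *+ j)%R.
Proof. by under eq_bigr do rewrite mul0rn addr0; rewrite sumr_const card_ord. Qed.

Lemma order_sg0 p f : (forall j, (forall x, (f x *+ j = 0)%R) -> p.+1 %| j) ->
  #[@sg p f 0%R] = p.+1.
Proof.
move=> Hf; apply/eqP; rewrite eqn_dvd; apply/andP; split.
  rewrite order_dvdn sgX; apply/eqP; rewrite -sg1; apply: sg_ext => [x|].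
    by rewrite sum_k0 mulrn_N.
  by rewrite mul0rn.
apply: Hf => x; have := expg_order (sg f 0%R); rewrite sgX => /sg_eq1 /(_ x).
by rewrite sum_k0.
Qed.

Lemma one_mulrn p j : 0 < p -> ((Zp1 : 'I_p.+1) *+ j = 0)%R -> p.+1 %| j.
Proof.
move=> p0 /(congr1 val); rewrite Zp_mulrn /= (@modn_small 1) ?ltnS // mul1n => H.
by rewrite /dvdn H.
Qed.

Definition K0set p : {set {perm ('I_p.+1 * 'I_p.+1)}} :=
  [set s | [exists f : {ffun 'I_p.+1 -> 'I_p.+1}, s == sg f 0%R]].

Lemma K0setP p s : reflect (exists f, s = @sg p f 0%R) (s \in K0set p).
Proof.
apply: (iffP idP).
  by rewrite inE => /existsP [f /eqP ->]; exists f.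
move=> [f ->]; rewrite inE; apply/existsP; exists (finfun f).
by apply/eqP/sg_ext => // x; rewrite ffunE.
Qed.

Lemma K0_group_set p : group_set (K0set p).
Proof.
apply/group_setP; split.
  by apply/K0setP; exists (fun _ => 0%R); rewrite sg1.
move=> s t /K0setP [f ->] /K0setP [f' ->].
by apply/K0setP; rewrite sgM addr0; eexists.
Qed.

Canonical K0 p := Group (K0_group_set p).

Lemma K0_abelian p : abelian (K0 p).
Proof.
apply/centsP => s /K0setP [f ->] t /K0setP [f' ->].
rewrite /commute !sgM; apply: sg_ext => [x|]; by rewrite ?addr0 // addrC.
Qed.

Lemma comm_SG p s t : s \in SG p -> t \in SG p -> [~ s, t] \in K0 p.
Proof.
move=> /SGsetP [f [k [_ ->]]] /SGsetP [f' [k' [_ ->]]].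
rewrite commgEl conjgE !sgV !mulgA !sgM; apply/K0setP; eexists; apply: sg_ext => //.
by rewrite addrAC subrK addNr.
Qed.

Lemma SGP p s : reflect (exists f k, @good p f /\ s = sg f k) (s \in SG p).
Proof. exact: SGsetP. Qed.

Lemma construct p (g : 'I_p.+1 -> 'I_p.+1) (x0 : 'I_p.+1) : 0 < p ->
  good g -> g (x0 + Zp1)%R = (g x0 + Zp1)%R ->
  exists (gT : finGroupType) (Q : {group gT}) (A B : gT),
    [/\ Q :=: <<[set A; B]>>,
        abelian (Q^`(1))%g,
        (forall h, h \in Q -> h ^+ p.+1 = 1),
        #[A] = p.+1
      & #[[~ A, B]] = p.+1].
Proof.
move=> p0 Hg Hx0.
pose A := sg g 0%R; pose B := @sg p (fun _ => 0%R) Zp1.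
have sQ : <<[set A; B]>> \subset SG p.
  rewrite gen_subG; apply/subsetP => s; rewrite in_set2 => /orP [] /eqP ->.
    by apply/SGP; exists g, 0%R.
  apply/SGP; exists (fun _ => 0%R), Zp1; split=> // x k; by rewrite big1.
exists _, <<[set A; B]>>%G, A, B; split=> //.
- apply: (abelianS _ (K0_abelian p)); rewrite derg1 /commutator gen_subG.
  apply/subsetP => c /imset2P [a b Ha Hb ->]; apply: comm_SG.
    exact: (subsetP sQ).
  exact: (subsetP sQ).
- move=> h /(subsetP sQ) /SGsetP [f [k [Hf ->]]]; rewrite sgX -sg1.
  by apply: sg_ext => [x|]; rewrite ?Hf ?mulrn_N.
- apply: order_sg0 => j Hj; apply: one_mulrn => //.
  have := Hj (x0 + Zp1)%R; rewrite Hx0 mulrnDl Hj add0r //.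
- have -> : [~ A, B] = sg (fun x => g (x - Zp1) - g x)%R 0%R.
    rewrite commgEl conjgE !sgV !mulgA !sgM; apply: sg_ext => [x|].
      by rewrite oppr0 !addr0 sub0r addrC.
    by rewrite oppr0 sub0r addr0 addNr.
  apply: order_sg0 => j Hj; apply: one_mulrn => //.
  have := Hj (x0 + Zp1)%R; rewrite addrK Hx0 opprD addrA subrr add0r mulNrn.
  by move/eqP; rewrite oppr_eq0 => /eqP.
Qed.
Close Scope group_scope.

Lemma val_sumZ p (I : Type) (r : seq I) (F : I -> 'I_p.+1) :
  nat_of_ord (\sum_(i <- r) F i)%R = (\sum_(i <- r) nat_of_ord (F i)) %% p.+1.
Proof.
elim: r => [|a r IH]; first by rewrite !big_nil mod0n.
by rewrite !big_cons /= IH modnDmr.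
Qed.

Lemma good_of p (G : nat -> nat) :
  (forall x k, (\sum_(l < p.+1) G ((x + k * l) %% p.+1)) %% p.+1 = 0) ->
  good (fun y : 'I_p.+1 => inZp (G y)).
Proof.
move=> H x k; apply: ord_inj; rewrite val_sumZ /=.
rewrite modn_summ -[RHS](H x k); congr (_ %% _); apply: eq_bigr => l _.
by rewrite Zp_mulrn /= modnDmr.
Qed.

Lemma x0_of p (G : nat -> nat) (x0 : nat) : x0.+1 < p.+1 -> G x0.+1 = (G x0).+1 ->
  (fun y : 'I_p.+1 => inZp (G y) : 'I_p.+1) (inZp x0 + Zp1)%R =
  ((fun y : 'I_p.+1 => inZp (G y) : 'I_p.+1) (inZp x0) + Zp1)%R.
Proof.
move=> lt HG; apply: val_inj => /=.
have l1 : 1 < p.+1 by apply: leq_ltn_trans lt.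
have l0 : x0 < p.+1 by apply: ltnW.
rewrite (modn_small l1) (modn_small l0) addn1 (modn_small lt) HG.
by rewrite modnDml addn1.
Qed.
Open Scope group_scope.

Theorem proposition2p1 (n : nat) (hn : (2 < n)%N) :
  exists (gT : finGroupType) (Q : {group gT}) (A B : gT),
    [/\ Q :=: <<[set A; B]>>,
        metabelian Q,
        (forall g, g \in Q -> g ^+ n = 1),
        #[A] = n
      & #[[~ A, B]] = n].
Proof.
case: n hn => [|[|[|p']]] // _.
set p := p'.+2.
suff [G [x0 [HG Hlt HG1]]] : exists (G : nat -> nat) (x0 : nat),
    [/\ (forall x k, (\sum_(l < p.+1) G ((x + k * l) %% p.+1)%N) %% p.+1 = 0)%N,
        (x0.+1 < p.+1)%N & G x0.+1 = (G x0).+1].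
  have [gT [Q [A [B [H1 H2 H3 H4 H5]]]]] :=
    @construct p _ (inZp x0) isT (good_of HG) (x0_of Hlt HG1).
  by exists gT, Q, A, B; split.
have [m cm NE] := @pfactor_coprime 2 p.+1 isT isT.
have om : odd m by rewrite -coprime2n.
case op: (odd p.+1).
  exists id, 0; split=> //.
  by move=> x k; exact: odd_sum.
move: NE; case E: (logn 2 p.+1) => [|e] NE.
  by move: op; rewrite NE muln1 om.
case: (ltnP 1 m) => m1.
  exists (Ge m e), 0; split=> //.
    by move=> x k; exact: even_sum.
  rewrite /Ge dvdn0 mod0n (modn_small m1) addn0 muln1.
  have -> : (2 ^ e.+1 %| 1)%N = false.
    by rewrite dvdn1 -(expn0 2) eqn_exp2l.
  by rewrite add0n muln1 add1n.
have m1' : m = 1%N by case: m om cm NE m1 => [|[|]].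
subst m.
exists (Ge 1 e), 1%N; split=> //.
  by move=> x k; exact: even_sum.
have e0 : 0 < e.
  case: e NE {E} => // NE; by move: NE; rewrite mul1n expn1 /p.
rewrite /Ge !modn1 !addn0 mul1n.
have -> : (2 ^ e.+1 %| 1)%N = false by rewrite dvdn1 -(expn0 2) eqn_exp2l.
have -> : (2 ^ e.+1 %| 2)%N = false.
  apply/negbTE/negP => /dvdn_leq H; move: (H isT); rewrite expnS.
  have : (1 < 2 ^ e)%N by rewrite -{1}(expn0 2) ltn_exp2l.
  lia.
by rewrite !muln0.
Qed.
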